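(* Let $a_1\ge\cdots\ge a_n$ and $b_1\ge\cdots\ge b_n$ be real numbers such that for every $1\le i<n$, either $\min(a_i,b_i)\ge\max(a_{i+1},b_{i+1})$ or $\{a_i,b_i\}=\{a_{i+1},b_{i+1}\}$; suppose further that $\sum_{i=1}^n a_i=\sum_{i=1}^n b_i$, $\sum_{i=1}^n a_i^2=\sum_{i=1}^n b_i^2$, and \[ \sum_{i=1}^j(a_i-a_j)(a_i-b_j)\ge\sum_{i=1}^j(b_i-a_j)(b_i-b_j)\quad\text{for all }1\le j\le n. \] Then $\sum_{i=1}^n f(a_i)\ge\sum_{i=1}^n f(b_i)$ for every three times differentiable $f:I\to\mathbb{R}$ with $f'''\ge 0$, where $I$ is any interval containing all the $a_i$ and $b_i$. *)

(* Defs.v *)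
From Stdlib Require Import Reals.
Open Scope R_scope.

Fixpoint sum1 (j : nat) (g : nat -> R) : R :=
  match j with
  | O => 0
  | S k => sum1 k g + g (S k)
  end.

Definition is_interval (I : R -> Prop) : Prop :=
  forall x y z, I x -> I y -> x <= z <= y -> I z.

(* f is three times differentiable on I (derivatives taken relative to I,
   so one-sided at endpoints belonging to I), with f''' >= 0 on I. *)
Definition thrice_diff_f3_nonneg (f : R -> R) (I : R -> Prop) : Prop :=
  exists f1 f2 f3 : R -> R,
    forall x, I x ->
      D_in f f1 I x /\ D_in f1 f2 I x /\ D_in f2 f3 I x /\ 0 <= f3 x.

(* Main.v *)
Require Import Defs.
From Stdlib Require Import Reals Lra Lia Psatz Classical.
Open Scope R_scope.

Lemma D_in_E f d D x : D_in f d D x <->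
  forall eps, eps > 0 -> exists alp, alp > 0 /\ forall y, D y -> y <> x ->
    Rabs (y - x) < alp -> Rabs ((f y - f x) / (y - x) - d x) < eps.
Proof.
  unfold D_in, limit1_in, limit_in, D_x; simpl; unfold Rdist. split.
  - intros H eps He. destruct (H eps He) as [alp [Ha H2]]. exists alp; split; [exact Ha|].
    intros y Dy Ny Hy. apply H2. split; auto.
  - intros H eps He. destruct (H eps He) as [alp [Ha H2]]. exists alp; split; [exact Ha|].
    intros y [[Dy Ny] Hy]. apply H2; auto.
Qed.

Lemma D_in_val f d1 d2 D x : d1 x = d2 x -> D_in f d1 D x -> D_in f d2 D x.
Proof. intros E H. unfold D_in in *. rewrite <- E. exact H. Qed.

Lemma mono_nonpos (h h' : R -> R) (I : R -> Prop) (a b : R) :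
  a <= b -> (forall x, a <= x <= b -> I x) ->
  (forall x, a <= x <= b -> D_in h h' I x /\ h' x <= 0) -> h b <= h a.
Proof.
  intros Hab HI Hd.
  assert (Key : forall eps, eps > 0 -> h b <= h a + eps * (b - a)).
  { intros eps He.
    set (E := fun x => a <= x <= b /\ forall y, a <= y <= x -> h y <= h a + eps * (y - a)).
    assert (Ea : E a). { split. lra. intros y Hy. assert (y = a) by lra. subst. lra. }
    assert (Eb : bound E). { exists b. intros x [Hx _]. lra. }
    destruct (completeness E Eb (ex_intro _ a Ea)) as [s [Hub Hlub]].
    assert (as_ : a <= s) by (apply Hub; exact Ea).
    assert (sb : s <= b) by (apply Hlub; intros x [Hx _]; lra).
    assert (K1 : forall y, a <= y < s -> h y <= h a + eps * (y - a)).
    { intros y Hy. destruct (classic (exists x, E x /\ y < x)) as [[x [[Hx1 Hx2] Hx3]]|Hn].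
      - apply Hx2. lra.
      - exfalso. assert (s <= y). { apply Hlub. intros x Ex.
          destruct (Rle_lt_dec x y); auto. exfalso; apply Hn. exists x; auto. }
        lra. }
    assert (K2 : h s <= h a + eps * (s - a)).
    { destruct (Req_dec s a) as [->|Hsa]. lra.
      destruct (Hd s (conj as_ sb)) as [Ds Hs0].
      pose proof (proj1 (D_in_E _ _ _ _) Ds) as Ds0; clear Ds; rename Ds0 into Ds. destruct (Ds eps He) as [alp [Hal Hq]].
      set (y := Rmax a (s - alp / 2)).
      assert (Hy1 : a <= y) by (unfold y; apply Rmax_l).
      assert (Hy2 : y < s) by (unfold y; apply Rmax_lub_lt; lra).
      assert (Hy3 : s - alp/2 <= y) by (unfold y; apply Rmax_r).
      specialize (Hq y (HI y ltac:(lra)) ltac:(lra) ltac:(rewrite Rabs_left; lra)).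
      set (q := (h y - h s) / (y - s)) in Hq.
      assert (Eq : h y - h s = q * (y - s)) by (unfold q; field; lra).
      apply Rabs_def2 in Hq. specialize (K1 y ltac:(lra)). nra. }
    assert (K3 : s = b).
    { destruct (Req_dec s b) as [|Hsb]; auto. exfalso.
      destruct (Hd s (conj as_ sb)) as [Ds Hs0].
      pose proof (proj1 (D_in_E _ _ _ _) Ds) as Ds0; clear Ds; rename Ds0 into Ds. destruct (Ds eps He) as [alp [Hal Hq]].
      set (y := Rmin b (s + alp / 2)).
      assert (Hy1 : y <= b) by (unfold y; apply Rmin_l).
      assert (Hy2 : s < y) by (unfold y; apply Rmin_glb_lt; lra).
      assert (Hy3 : y <= s + alp/2) by (unfold y; apply Rmin_r).
      assert (Ey : E y).
      { split. lra. intros z Hz.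
        destruct (Rlt_le_dec z s). apply K1; lra.
        destruct (Req_dec z s) as [->|Hzs]. exact K2.
        specialize (Hq z (HI z ltac:(lra)) ltac:(lra) ltac:(rewrite Rabs_right; lra)).
        set (q := (h z - h s) / (z - s)) in Hq.
        assert (Eq : h z - h s = q * (z - s)) by (unfold q; field; lra).
        apply Rabs_def2 in Hq. nra. }
      specialize (Hub y Ey). lra. }
    subst s. exact K2. }
  destruct (Rle_lt_dec (h b) (h a)) as [|Hlt]; auto.
  destruct (Req_dec a b) as [->|Hne]. lra.
  specialize (Key ((h b - h a) / (2 * (b - a))) ltac:(apply Rdiv_lt_0_compat; lra)).
  assert (Eq : (h b - h a) / (2 * (b - a)) * (b - a) = (h b - h a) / 2) by (field; lra).
  lra.
Qed.

Lemma sum1_ext n g h : (forall i, (1 <= i <= n)%nat -> g i = h i) -> sum1 n g = sum1 n h.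
Proof.
  induction n; intros H; simpl; auto.
  rewrite IHn. rewrite (H (S n)); auto; lia. intros; apply H; lia.
Qed.

Lemma sum1_split p k g : sum1 (p + k) g = sum1 p g + sum1 k (fun i => g (p + i)%nat).
Proof.
  induction k; simpl. rewrite Nat.add_0_r; ring.
  rewrite Nat.add_succ_r; simpl. rewrite IHk. ring.
Qed.

Lemma sum1_const k c : sum1 k (fun _ => c) = INR k * c.
Proof. induction k; cbn [sum1]. simpl; ring. rewrite IHk, S_INR. ring. Qed.

Lemma sum1_zero k g : (forall i, (1 <= i <= k)%nat -> g i = 0) -> sum1 k g = 0.
Proof. intros H. rewrite (sum1_ext k g (fun _ => 0)) by auto. rewrite sum1_const; ring. Qed.

Lemma D_in_sum (n : nat) (g g' : nat -> R -> R) I t :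
  (forall i, D_in (g i) (g' i) I t) ->
  D_in (fun s => sum1 n (fun i => g i s)) (fun s => sum1 n (fun i => g' i s)) I t.
Proof.
  intros H. induction n; simpl.
  - apply Dconst.
  - apply Dadd; auto.
Qed.

Lemma first_fail (P : nat -> Prop) : (forall i, P i \/ ~ P i) -> forall n,
  exists p, (p <= n)%nat /\ (forall i, (1 <= i <= p)%nat -> P i) /\ ((p < n)%nat -> ~ P (S p)).
Proof.
  intros Hd n. induction n.
  - exists 0%nat. split. lia. split. intros; lia. intros; lia.
  - destruct IHn as [p [H1 [H2 H3]]].
    destruct (Nat.eq_dec p n) as [->|Hne].
    + destruct (Hd (S n)) as [HP|HP].
      * exists (S n). split. lia. split. intros i Hi.
        destruct (Nat.eq_dec i (S n)) as [->|]; auto. apply H2; lia. intros; lia.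
      * exists n. split. lia. split; auto.
    + exists p. split. lia. split; auto. intros _. apply H3. lia.
Qed.

Lemma lin_interp A B u v t : u <= t <= v -> 0 <= A - 2*u*B -> 0 <= A - 2*v*B -> 0 <= A - 2*t*B.
Proof. intros H H1 H2. destruct (Rle_lt_dec 0 B); nra. Qed.

Definition pp (u : R) := Rmax u 0 * Rmax u 0.

Lemma D_in_local f g d D x : D x ->
  (exists del, del > 0 /\ forall y, D y -> Rabs (y - x) < del -> g y = f y) ->
  D_in f d D x -> D_in g d D x.
Proof.
  intros Dx [del [Hd Hfg]] H. apply D_in_E. intros eps He.
  destruct (proj1 (D_in_E _ _ _ _) H eps He) as [alp [Ha Hq]].
  exists (Rmin alp del). split. apply Rmin_glb_lt; lra.
  intros y Dy Ny Hy.
  assert (Hy1 : Rabs (y - x) < alp) by (eapply Rlt_le_trans; [exact Hy| apply Rmin_l]).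
  assert (Hy2 : Rabs (y - x) < del) by (eapply Rlt_le_trans; [exact Hy| apply Rmin_r]).
  rewrite (Hfg y Dy Hy2), (Hfg x Dx ltac:(rewrite Rminus_diag, Rabs_R0; lra)).
  apply Hq; auto.
Qed.

Section Taylor.
Variables (f f1 f2 f3 : R -> R) (I : R -> Prop).
Hypothesis Hf : forall x, I x -> D_in f f1 I x /\ D_in f1 f2 I x /\ D_in f2 f3 I x /\ 0 <= f3 x.

Definition Rt (x t : R) := f x - f t - f1 t * (x - t) - (/2) * (f2 t * ((x - t) * (x - t))).

Lemma Rt_deriv x t : I t ->
  D_in (fun s => Rt x s) (fun s => - (/2) * (f3 s * ((x - s) * (x - s)))) I t.
Proof.
  intros It. destruct (Hf t It) as [H1 [H2 [H3 _]]].
  unfold Rt. eapply D_in_val; cycle 1.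
  { apply Dminus. apply Dminus. apply Dminus. apply Dconst. exact H1.
    apply Dmult. exact H2. apply Dminus. apply Dconst. apply Dx.
    apply Dmult. apply Dconst. apply Dmult. exact H3.
    apply Dmult; (apply Dminus; [apply Dconst| apply Dx]). }
  simpl. field.
Qed.

Definition Tt (x t : R) := if Rle_dec t x then Rt x t else 0.

Lemma Tt_deriv x t : I t ->
  D_in (fun s => Tt x s) (fun s => - (/2) * (f3 s * pp (x - s))) I t.
Proof.
  intros It. destruct (Rtotal_order t x) as [Hlt|[Heq|Hgt]].
  - eapply D_in_val; cycle 1.
    { apply (D_in_local (fun s => Rt x s)). exact It.
      exists (x - t). split. lra. intros y _ Hy. unfold Tt.
      destruct (Rle_dec y x) as [|n]; auto. exfalso. apply Rabs_def2 in Hy. lra.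
      apply Rt_deriv; auto. }
    unfold pp. rewrite Rmax_left by lra. reflexivity.
  - subst t. apply D_in_E. intros eps He.
    destruct (proj1 (D_in_E _ _ _ _) (Rt_deriv x x It) eps He) as [alp [Ha Hq]].
    exists alp. split; auto. intros y Dy Ny Hy.
    unfold pp. rewrite Rminus_diag, Rmax_right by lra.
    unfold Tt at 2. destruct (Rle_dec x x) as [_|n]; [|lra].
    assert (E0 : Rt x x = 0) by (unfold Rt; ring). rewrite E0.
    unfold Tt. destruct (Rle_dec y x) as [Hyx|Hyx].
    + specialize (Hq y Dy Ny Hy). rewrite E0, Rminus_diag in Hq.
      replace (- / 2 * (f3 x * (0 * 0))) with (- / 2 * (f3 x * (0 * 0))) by ring.
      exact Hq.
    + replace ((0 - 0) / (y - x) - - / 2 * (f3 x * (0 * 0))) with 0 by (field; lra).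
      rewrite Rabs_R0; lra.
  - eapply D_in_val; cycle 1.
    { apply (D_in_local (fun _ => 0)). exact It.
      exists (t - x). split. lra. intros y _ Hy. unfold Tt.
      destruct (Rle_dec y x) as [|n]; auto. exfalso. apply Rabs_def2 in Hy. lra.
      apply Dconst. }
    unfold pp. rewrite Rmax_right by lra. ring.
Qed.

End Taylor.


Section Comb.
Variables (n : nat) (a b : nat -> R).
Hypothesis ha : forall i, (1 <= i < n)%nat -> a (S i) <= a i.
Hypothesis hb : forall i, (1 <= i < n)%nat -> b (S i) <= b i.
Hypothesis hab : forall i, (1 <= i < n)%nat ->
     Rmin (a i) (b i) >= Rmax (a (S i)) (b (S i)) \/
     ((a i = a (S i) /\ b i = b (S i)) \/ (a i = b (S i) /\ b i = a (S i))).
Hypothesis hsum : sum1 n a = sum1 n b.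
Hypothesis hsq : sum1 n (fun i => a i ^ 2) = sum1 n (fun i => b i ^ 2).
Hypothesis hj : forall j, (1 <= j <= n)%nat ->
     sum1 j (fun i => (a i - a j) * (a i - b j)) >=
     sum1 j (fun i => (b i - a j) * (b i - b j)).

Definition L p t := sum1 p (fun i => (a i - t) * (a i - t) - (b i - t) * (b i - t)).
Definition c i := (a i + b i) / 2.
Definition lo i := Rmin (a i) (b i).
Definition hi i := Rmax (a i) (b i).

Lemma L_form p t : L p t = (sum1 p (fun i => a i ^ 2) - sum1 p (fun i => b i ^ 2))
   - 2 * t * (sum1 p a - sum1 p b).
Proof. unfold L. induction p; cbn [sum1]. ring. rewrite IHp. ring. Qed.

Lemma L_interp p u v t : u <= t <= v -> 0 <= L p u -> 0 <= L p v -> 0 <= L p t.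
Proof. rewrite !L_form. apply lin_interp. Qed.

Lemma L_n t : L n t = 0.
Proof. rewrite L_form, hsq, hsum. ring. Qed.

Lemma L_0 t : L 0 t = 0.
Proof. reflexivity. Qed.

Lemma hj_iden k u v : sum1 k (fun i => (a i - u) * (a i - v)) - sum1 k (fun i => (b i - u) * (b i - v))
  = L k ((u + v) / 2).
Proof. unfold L. induction k; simpl. ring. rewrite <- IHk. field. Qed.

Lemma L_hj j : (1 <= j <= n)%nat -> 0 <= L j (c j).
Proof. intros Hj. unfold c. rewrite <- hj_iden. specialize (hj j Hj). lra. Qed.

Lemma L_prev k : L (S k) (c (S k)) = L k (c (S k)).
Proof. unfold L at 1. cbn [sum1]. fold (L k (c (S k))). unfold c. field. Qed.

Lemma mono_a i j : (1 <= i <= j)%nat -> (j <= n)%nat -> a j <= a i /\ b j <= b i.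
Proof.
  intros Hij Hjn. induction j.
  - lia.
  - destruct (Nat.eq_dec i (S j)) as [->|Hne]. lra.
    destruct IHj as [H1 H2]; try lia.
    split; [apply Rle_trans with (a j)|apply Rle_trans with (b j)]; auto;
      [apply ha|apply hb]; lia.
Qed.

Lemma lo_mono i j : (1 <= i <= j)%nat -> (j <= n)%nat -> lo j <= lo i.
Proof. intros H1 H2. destruct (mono_a i j H1 H2). unfold lo, Rmin.
  repeat destruct Rle_dec; lra. Qed.

Lemma hi_mono i j : (1 <= i <= j)%nat -> (j <= n)%nat -> hi j <= hi i.
Proof. intros H1 H2. destruct (mono_a i j H1 H2). unfold hi, Rmax.
  repeat destruct Rle_dec; lra. Qed.

Lemma pair_step i : (1 <= i < n)%nat -> hi (S i) <= lo i \/ (a (S i) = a i /\ b (S i) = b i).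
Proof.
  intros Hi. destruct (hab i Hi) as [H|[[H1 H2]|[H1 H2]]].
  - left. unfold hi, lo. lra.
  - right. split; congruence.
  - right. pose proof (ha i Hi). pose proof (hb i Hi). split; lra.
Qed.

Lemma lo_le_c i : lo i <= c i.
Proof. unfold lo, c, Rmin. destruct Rle_dec; lra. Qed.
Lemma c_le_hi i : c i <= hi i.
Proof. unfold hi, c, Rmax. destruct Rle_dec; lra. Qed.

Lemma pp_pos u : 0 <= u -> pp u = u * u.
Proof. intros. unfold pp. rewrite Rmax_left by lra. reflexivity. Qed.
Lemma pp_neg u : u <= 0 -> pp u = 0.
Proof. intros. unfold pp. rewrite Rmax_right by lra. ring. Qed.

Lemma D_nonneg t : 0 <= sum1 n (fun i => pp (a i - t) - pp (b i - t)).
Proof.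
  set (phi := fun i => pp (a i - t) - pp (b i - t)).
  destruct (first_fail (fun i => t <= lo i) ltac:(intros i; destruct (Rle_dec t (lo i)); tauto) n)
    as [p [Hpn [HP1 HP2]]].
  destruct (first_fail (fun i => t < hi (p + i)) ltac:(intros i; destruct (Rlt_dec t (hi (p + i))); tauto) (n - p))
    as [k [Hkn [HQ1 HQ2]]].
  set (r := (p + k)%nat).
  assert (Hsplit : sum1 n phi = sum1 p phi + sum1 k (fun i => phi (p + i)%nat)
     + sum1 (n - p - k) (fun i => phi (r + i)%nat)).
  { replace n with (r + (n - p - k))%nat at 1 by (unfold r; lia).
    rewrite sum1_split. unfold r. rewrite sum1_split. reflexivity. }
  assert (Hfirst : sum1 p phi = L p t).
  { apply sum1_ext. intros i Hi. specialize (HP1 i Hi). unfold phi, lo, Rmin in *.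
    rewrite !pp_pos; destruct Rle_dec; lra. }
  assert (Hthird : sum1 (n - p - k) (fun i => phi (r + i)%nat) = 0).
  { apply sum1_zero. intros i Hi.
    assert (Hk : (k < n - p)%nat) by lia.
    specialize (HQ2 Hk). apply Rnot_lt_le in HQ2.
    assert (Hh : hi (r + i) <= hi (p + S k)) by (apply hi_mono; unfold r; lia).
    unfold phi. unfold hi, Rmax in Hh, HQ2. rewrite !pp_neg; destruct Rle_dec; try lra;
    destruct Rle_dec; lra. }
  rewrite Hsplit, Hfirst, Hthird. unfold phi. clear Hsplit Hfirst Hthird.
  destruct (Nat.eq_dec k 0) as [Hk0|Hk0].
  - subst k. simpl. rewrite Rplus_0_r, Rplus_0_r.
    destruct (Nat.eq_dec p 0) as [->|Hp0]. rewrite L_0; lra.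
    destruct (Nat.eq_dec p n) as [->|Hpn']. rewrite L_n; lra.
    assert (Hlt : (0 < n - p)%nat) by lia.
    specialize (HQ2 Hlt). apply Rnot_lt_le in HQ2. rewrite Nat.add_1_r in HQ2.
    apply L_interp with (c (S p)) (c p).
    + split. pose proof (c_le_hi (S p)); lra.
      pose proof (HP1 p ltac:(lia)). pose proof (lo_le_c p). lra.
    + rewrite <- L_prev. apply L_hj. lia.
    + apply L_hj. lia.
  - set (x := a (S p)). set (y := b (S p)).
    assert (Hpn2 : (p < n)%nat) by lia.
    assert (Hlo1 : lo (S p) < t) by (apply Rnot_le_lt; apply HP2; lia).
    assert (Hhi1 : t < hi (S p)) by (rewrite <- Nat.add_1_r; apply HQ1; lia).
    assert (Heq : forall i, (1 <= i <= k)%nat -> a (p + i)%nat = x /\ b (p + i)%nat = y).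
    { intros i Hi. induction i. lia.
      destruct (Nat.eq_dec i 0) as [->|Hi0]. rewrite Nat.add_1_r; auto.
      destruct IHi as [IH1 IH2]. lia.
      destruct (pair_step (p + i) ltac:(lia)) as [Hs|[Hs1 Hs2]].
      - exfalso. assert (t < hi (p + S i)) by (apply HQ1; lia).
        assert (lo (p + i) <= lo (S p)) by (apply lo_mono; lia).
        rewrite Nat.add_succ_r in *. lra.
      - rewrite Nat.add_succ_r. split; congruence. }
    assert (Hmid : sum1 k (fun i => pp (a (p + i)%nat - t) - pp (b (p + i)%nat - t))
        = INR k * (pp (x - t) - pp (y - t))).
    { rewrite <- sum1_const. apply sum1_ext. intros i Hi. destruct (Heq i Hi) as [-> ->]. reflexivity. }
    rewrite Hmid.
    assert (HLr : forall s, L r s = L p s + INR k * ((x - s) * (x - s) - (y - s) * (y - s))).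
    { intros s. unfold L, r. rewrite sum1_split. f_equal. rewrite <- sum1_const. apply sum1_ext.
      intros i Hi. destruct (Heq i Hi) as [-> ->]. reflexivity. }
    assert (Hcr : c r = c (S p)).
    { unfold c, r. destruct (Heq k ltac:(lia)) as [-> ->]. reflexivity. }
    assert (Hlr : lo r = lo (S p)).
    { unfold lo, r. destruct (Heq k ltac:(lia)) as [-> ->]. reflexivity. }
    assert (Hhr : hi r = hi (S p)).
    { unfold hi, r. destruct (Heq k ltac:(lia)) as [-> ->]. reflexivity. }
    assert (Lp_ok : forall s, c (S p) <= s <= hi (S p) -> 0 <= L p s).
    { intros s Hs. destruct (Nat.eq_dec p 0) as [->|Hp0]. rewrite L_0; lra.
      apply L_interp with (c (S p)) (c p).
      - split. lra.
        destruct (pair_step p ltac:(lia)) as [Hst|[Hs1 Hs2]].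
        + pose proof (lo_le_c p). lra.
        + exfalso. pose proof (HP1 p ltac:(lia)). unfold lo in *. rewrite Hs1, Hs2 in Hlo1. lra.
      - rewrite <- L_prev. apply L_hj. lia.
      - apply L_hj. lia. }
    assert (Lr_ok : forall s, lo (S p) <= s <= c (S p) -> 0 <= L r s).
    { intros s Hs. destruct (Nat.eq_dec r n) as [->|Hrn]. rewrite L_n; lra.
      assert (Hk' : (k < n - p)%nat) by (unfold r in Hrn; lia).
      specialize (HQ2 Hk'). apply Rnot_lt_le in HQ2.
      replace (p + S k)%nat with (S r) in HQ2 by (unfold r; lia).
      apply L_interp with (c (S r)) (c r).
      - split. 2: lra.
        destruct (pair_step r ltac:(unfold r; lia)) as [Hst|[Hs1 Hs2]].
        + pose proof (c_le_hi (S r)). lra.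
        + exfalso. unfold hi in HQ2, Hhr, Hhi1. rewrite Hs1, Hs2 in HQ2. lra.
      - rewrite <- L_prev. apply L_hj. unfold r in *; lia.
      - apply L_hj. unfold r; lia. }
    pose proof (pos_INR k) as Hkpos.
    assert (Hc : c (S p) = (x + y) / 2) by reflexivity.
    rewrite Hc in Lp_ok, Lr_ok.
    destruct (Rle_dec x y) as [Hxy|Hxy].
    +
      assert (Hl : lo (S p) = x) by (apply Rmin_left; exact Hxy).
      assert (Hh : hi (S p) = y) by (apply Rmax_right; exact Hxy).
      rewrite Hl in Lr_ok, Hlo1. rewrite Hh in Lp_ok, Hhi1.
      assert (Hxy' : x < y) by lra.
      rewrite (pp_neg (x - t)) by lra. rewrite (pp_pos (y - t)) by lra.
      assert (E1 : 0 <= L p y) by (apply Lp_ok; lra).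
      assert (E2 : 0 <= L r x) by (apply Lr_ok; lra).
      rewrite HLr in E2. rewrite L_form in E1, E2 |- *.
      set (A := sum1 p (fun i => a i ^ 2) - sum1 p (fun i => b i ^ 2)) in *.
      set (B := sum1 p a - sum1 p b) in *.
      assert (Id : (y - x) * (A - 2 * t * B + INR k * (0 - (y - t) * (y - t))) =
         (y - t) * (A - 2 * x * B + INR k * ((x - x) * (x - x) - (y - x) * (y - x)))
         + (t - x) * (A - 2 * y * B) + INR k * ((y - x) * ((y - t) * (t - x)))) by ring.
      assert (P1 : 0 <= (y - t) * (A - 2 * x * B + INR k * ((x - x) * (x - x) - (y - x) * (y - x))))
        by (apply Rmult_le_pos; lra).
      assert (P2 : 0 <= (t - x) * (A - 2 * y * B)) by (apply Rmult_le_pos; lra).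
      assert (P3 : 0 <= INR k * ((y - x) * ((y - t) * (t - x)))).
      { apply Rmult_le_pos; auto. apply Rmult_le_pos; [lra|]. apply Rmult_le_pos; lra. }
      assert (0 <= (y - x) * (A - 2 * t * B + INR k * (0 - (y - t) * (y - t)))) by lra.
      apply (Rmult_le_reg_l (y - x)). lra. lra.
    + assert (Hyx : y <= x) by lra. assert (Hl : lo (S p) = y) by (apply Rmin_right; exact Hyx).
      assert (Hh : hi (S p) = x) by (apply Rmax_left; exact Hyx).
      rewrite Hl in Lr_ok, Hlo1. rewrite Hh in Lp_ok, Hhi1.
      rewrite (pp_pos (x - t)) by lra. rewrite (pp_neg (y - t)) by lra.
      destruct (Rle_dec ((x + y) / 2) t) as [Ht|Ht].
      * assert (0 <= L p t) by (apply Lp_ok; lra).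
        assert (0 <= INR k * ((x - t) * (x - t))) by (apply Rmult_le_pos; nra).
        lra.
      * assert (0 <= L r t) by (apply Lr_ok; lra).
        rewrite HLr in H.
        assert (0 <= INR k * ((y - t) * (y - t))) by (apply Rmult_le_pos; nra).
        lra.
Qed.

End Comb.

Theorem mainTheorem12 (n : nat) (a b : nat -> R)
  (ha : forall i, (1 <= i < n)%nat -> a (S i) <= a i)
  (hb : forall i, (1 <= i < n)%nat -> b (S i) <= b i)
  (hab : forall i, (1 <= i < n)%nat ->
     Rmin (a i) (b i) >= Rmax (a (S i)) (b (S i)) \/
     ((a i = a (S i) /\ b i = b (S i)) \/ (a i = b (S i) /\ b i = a (S i))))
  (hsum : sum1 n a = sum1 n b)
  (hsq : sum1 n (fun i => a i ^ 2) = sum1 n (fun i => b i ^ 2))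
  (hj : forall j, (1 <= j <= n)%nat ->
     sum1 j (fun i => (a i - a j) * (a i - b j)) >=
     sum1 j (fun i => (b i - a j) * (b i - b j)))
  (I : R -> Prop) (hI : is_interval I)
  (haI : forall i, (1 <= i <= n)%nat -> I (a i))
  (hbI : forall i, (1 <= i <= n)%nat -> I (b i))
  (f : R -> R) (hf : thrice_diff_f3_nonneg f I) :
  sum1 n (fun i => f (a i)) >= sum1 n (fun i => f (b i)).
Proof.
  destruct hf as [f1 [f2 [f3 Hf]]].
  destruct (Nat.eq_dec n 0) as [->|Hn0]. simpl; lra.
  set (m := Rmin (a n) (b n)). set (M := Rmax (a 1%nat) (b 1%nat)).
  assert (Bd : forall i, (1 <= i <= n)%nat -> m <= a i <= M /\ m <= b i <= M).
  { intros i Hi. destruct (mono_a n a b ha hb i n ltac:(lia) ltac:(lia)) as [H1 H2].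
    destruct (mono_a n a b ha hb 1 i ltac:(lia) ltac:(lia)) as [H3 H4].
    unfold m, M, Rmin, Rmax. repeat destruct Rle_dec; lra. }
  assert (Im : I m) by (unfold m, Rmin; destruct Rle_dec; [apply haI|apply hbI]; lia).
  assert (IM : I M) by (unfold M, Rmax; destruct Rle_dec; [apply hbI|apply haI]; lia).
  assert (mM : m <= M) by (destruct (Bd 1%nat ltac:(lia)); lra).
  set (G := fun s => sum1 n (fun i => Tt f f1 f2 (a i) s - Tt f f1 f2 (b i) s)).
  assert (Hmono : G M <= G m).
  { apply (mono_nonpos G (fun s => sum1 n (fun i => - (/2) * (f3 s * pp (a i - s)) - - (/2) * (f3 s * pp (b i - s)))) I).
    exact mM. intros x Hx. apply (hI m M x); auto.
    intros x Hx. assert (Ix : I x) by (apply (hI m M x); auto). split.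
    - unfold G. apply (D_in_sum n (fun i s => Tt f f1 f2 (a i) s - Tt f f1 f2 (b i) s)).
      intros i. apply Dminus; apply Tt_deriv with (I := I); auto.
    - assert (Eq : forall k, sum1 k (fun i => - (/2) * (f3 x * pp (a i - x)) - - (/2) * (f3 x * pp (b i - x)))
          = - (/2) * f3 x * sum1 k (fun i => pp (a i - x) - pp (b i - x))).
      { induction k; cbn [sum1]. ring. rewrite IHk. ring. }
      rewrite Eq. pose proof (D_nonneg n a b ha hb hab hsum hsq hj x).
      destruct (Hf x Ix) as [_ [_ [_ H3]]].
      assert (0 <= f3 x * sum1 n (fun i => pp (a i - x) - pp (b i - x))) by (apply Rmult_le_pos; auto).
      lra. }
  assert (GM : G M = 0).
  { unfold G. apply sum1_zero. intros i Hi. destruct (Bd i Hi) as [[_ H1] [_ H2]].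
    assert (Z : forall x, x <= M -> Tt f f1 f2 x M = 0).
    { intros x Hx. unfold Tt. destruct Rle_dec. assert (x = M) by lra. subst x. unfold Rt. ring. reflexivity. }
    rewrite !Z by auto. ring. }
  assert (Gm : G m = sum1 n (fun i => f (a i)) - sum1 n (fun i => f (b i))).
  { unfold G. rewrite (sum1_ext n _ (fun i => Rt f f1 f2 (a i) m - Rt f f1 f2 (b i) m)).
    - assert (Id : forall k, sum1 k (fun i => Rt f f1 f2 (a i) m - Rt f f1 f2 (b i) m) =
        sum1 k (fun i => f (a i)) - sum1 k (fun i => f (b i)) - f1 m * (sum1 k a - sum1 k b)
        - / 2 * f2 m * ((sum1 k (fun i => a i ^ 2) - sum1 k (fun i => b i ^ 2)) - 2 * m * (sum1 k a - sum1 k b))).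
      { induction k; cbn [sum1]. ring. rewrite IHk. unfold Rt. ring. }
      rewrite Id, hsum, hsq. ring.
    - intros i Hi. destruct (Bd i Hi) as [[H1 _] [H2 _]]. unfold Tt.
      destruct Rle_dec; [|lra]. destruct Rle_dec; [|lra]. reflexivity. }
  lra.
Qed.
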